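(* Consider the following data. For $i=1,\dots,n_z$ and $j=1,\dots,n_u$ let $A_{c,ij}\in\mathbb{R}^{n_{ij}\times n_{ij}}$ and delays $\tau_{ij}\ge0$ be given, let $T_s>0$, and write $\tau_{ij}/T_s=m_{ij}-v_{ij}$ with $m_{ij}\in\mathbb{Z}_{\ge0}$ and $0\le v_{ij}<1$. Let $A_c=\mathrm{diag}(A_{c,11},A_{c,21},\dots,A_{c,n_zn_u})\in\mathbb{R}^{n_x\times n_x}$ and $V=\mathrm{diag}(v_{11}I_{n_{11}},v_{21}I_{n_{21}},\dots,v_{n_zn_u}I_{n_{n_zn_u}})$. Let $\bar m=\max_{ij}m_{ij}$, $n_{\tilde u}=(\bar m+1)n_u$, and let $B_{1c},B_{2c}\in\mathbb{R}^{n_x\times n_{\tilde u}}$, $C_c\in\mathbb{R}^{n_z\times n_x}$, $D_o\in\mathbb{R}^{n_z\times n_{\tilde u}}$ be the matrices of the delayed system (constructed as in the context). Let $Q_c\in\mathbb{R}^{n_z\times n_z}$ be symmetric positive semidefinite and $\mu>0$. Put $n_{xu}=n_x+n_{\tilde u}$, $I_{xu}$ the $n_{xu}\times n_{xu}$ identity, $I_h=\mathrm{diag}(I_{xu},I_{xu},I_{xu})$, $\bar B_{2c}=V(B_{2c}-B_{1c})$, $$H_{1c}=\begin{bmatrix}A_c&B_{1c}\\0&0\end{bmatrix},\ H_{2c}=\begin{bmatrix}VA_c&\bar B_{2c}\\0&0\end{bmatrix},\ H_{3c}=\begin{bmatrix}VA_c&0\\0&0\end{bmatrix},\ H_c=\mathrm{diag}(H_{1c},H_{2c},H_{3c}),$$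 $H_{cq}=H_c-\tfrac{\mu}{2}I_h$, $H_{cm}=H_c-\mu I_h$, $E_1=[I_{xu},\,I_{xu},\,-I_{xu}]$, $E_2=[I_{xu};I_{xu};I_{xu}]$, $\bar M_c=-\begin{bmatrix}C_c&D_o\end{bmatrix}'Q_c$, $\bar Q_c=-\bar M_c\begin{bmatrix}C_c&D_o\end{bmatrix}$. Let $A(t),A_v(t),B_1(t),B_2(t),H_q(t),H_m(t),Q(t),M(t)$, $t\in[0,T_s]$, solve $$\dot A=A_cA,\ A(0)=I;\quad \dot A_v=VA_cA_v,\ A_v(0)=I;\quad \dot B_1=A(t)B_{1c},\ B_1(0)=0;\quad \dot B_2=A_v(t)\bar B_{2c},\ B_2(0)=0;$$ $$\dot H_q=H_{cq}H_q,\ H_q(0)=I_h;\quad \dot H_m=H_{cm}H_m,\ H_m(0)=I_h;$$ $$\dot Q=\Gamma_q(t)'\bar Q_c\Gamma_q(t),\ Q(0)=0;\quad \dot M=\Gamma_m(t)'\bar M_c,\ M(0)=0,$$ where $\Gamma_q(t)=E_1H_q(t)E_2$ and $\Gamma_m(t)=E_1H_m(t)E_2$. Then $A=A(T_s)$, $B_o=B_1(T_s)+B_2(T_s)$, $Q=Q(T_s)$, $M=M(T_s)$ are the discrete-time matrices of the discounted LQ optimal control problem with time delays, namely $$A=e^{A_cT_s},\qquad B_o=\int_0^{T_s}e^{A_ct}B_{1c}\,dt+V\int_0^{T_s}e^{VA_ct}(B_{2c}-B_{1c})\,dt,$$ $$Q=\int_0^{T_s}e^{-\mu s}\Gamma(s)'\bar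 Q_c\Gamma(s)\,ds,\qquad M=\int_0^{T_s}e^{-\mu s}\Gamma(s)'\bar M_c\,ds,$$ where $\Gamma(s)=\begin{bmatrix}e^{A_cs}&B_o(s)\\0&I\end{bmatrix}$ with $B_o(s)=\int_0^{s}e^{A_cr}B_{1c}\,dr+V\int_0^{s}e^{VA_cr}(B_{2c}-B_{1c})\,dr$.
   Context: Time-delay MIMO system: for $i=1,\dots,n_z$, $j=1,\dots,n_u$, the SISO subsystem from input $j$ to output $i$ is $\dot x_{ij}(t)=A_{c,ij}x_{ij}(t)+B_{c,ij}u_j(t-\tau_{ij})$, $z_{ij}(t)=C_{c,ij}x_{ij}(t)+D_{c,ij}u_j(t-\tau_{ij})$, with $B_{c,ij}\in\mathbb{R}^{n_{ij}\times1}$, $C_{c,ij}\in\mathbb{R}^{1\times n_{ij}}$, $D_{c,ij}\in\mathbb{R}$; the full state is $x=[x_{11};x_{21};\dots;x_{n_zn_u}]\in\mathbb{R}^{n_x}$, input $u=[u_1;\dots;u_{n_u}]$, output $z=[z_1;\dots;z_{n_z}]$ with $z_i=\sum_j z_{ij}$. Inputs are piecewise constant, $u(t)=u_k$ on $[t_k,t_{k+1})$, $t_k=t_0+kT_s$, and the augmented input is $\tilde u_k=[u_{k-\bar m};\dots;u_{k-1};u_k]\in\mathbb{R}^{(\bar m+1)n_u}$. Let $e_j\in\mathbb{R}^{1\times n_u}$ be the $j$-th unit row vector and $E^p_{\bar m+1}\in\mathbb{R}^{n_u\times(\bar m+1)n_u}$ the block row whose $p$-th block is $I_{n_u}$ and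 others zero ($p=1,\dots,\bar m+1$). Then $B_{1c}=[B_{1c,11};B_{1c,21};\dots;B_{1c,n_zn_u}]$ with $B_{1c,ij}=B_{c,ij}e_jE^{m_{ij}}_{\bar m+1}$, $B_{2c}=[B_{2c,11};\dots;B_{2c,n_zn_u}]$ with $B_{2c,ij}=B_{c,ij}e_jE^{m_{ij}+1}_{\bar m+1}$; $C_c=[\bar C_1,\dots,\bar C_{n_u}]$ with $\bar C_j=\mathrm{diag}(C_{c,1j},\dots,C_{c,n_zj})$; $D_o=[\bar D_1;\dots;\bar D_{n_z}]$ with $\bar D_i=\sum_{j}D_{c,ij}e_jE^{m_{ij}}_{\bar m+1}$. In the discrete-time equivalent, the augmented state $\tilde x_k=[x_k;\,u_{k-\bar m};\dots;u_{k-1}]$ evolves with blocks of $A$ and $B_o$, and the stage costs have the form $\tfrac12[\tilde x_k;u_k]'e^{-\mu t_k}Q[\tilde x_k;u_k]+(e^{-\mu t_k}M\bar z_k)'[\tilde x_k;u_k]+\rho_k$ for the discounted cost $\int \tfrac12 e^{-\mu t}(z-\bar z)'Q_c(z-\bar z)\,dt$. A prime denotes transpose. *)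

(* Defs.v *)
From HB Require Import structures.
From mathcomp Require Import all_boot all_order all_algebra.
From mathcomp Require Import all_classical all_reals all_analysis.
Set Implicit Arguments. Unset Strict Implicit. Unset Printing Implicit Defensive.
Import Order.TTheory GRing.Theory Num.Theory.
Import numFieldNormedType.Exports.
Local Open Scope classical_set_scope.
Local Open Scope ring_scope.

Definition expmx (R : realType) (n : nat) (A : 'M[R]_n) : 'M[R]_n :=
  limn (series (fun k : nat => (k`!%:R)^-1 *: A ^+ k)).

Definition mxint (R : realType) (p q : nat) (f : R -> 'M[R]_(p, q)) (a b : R)
  : 'M[R]_(p, q) :=
  \matrix_(i, j) (\int[@lebesgue_measure R]_(t in `[a, b]) f t i j).

Definition solves_on (R : realType) (p q : nat) (T : R)
  (F : R -> 'M[R]_(p, q)) (G : R -> 'M[R]_(p, q)) : Prop :=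
  {within `[0, T], continuous F} /\
  (forall t : R, 0 < t < T -> is_derive t 1 F (G t)).

(** Blocks are indexed by k : 'I_(nz * nu), k <-> (i, j) (0-based) with
    k = i + nz * j, i.e. the order 11, 21, ..., nz 1, 12, ..., nz nu. *)
Definition iof (nz k : nat) : nat := (k %% nz)%N.
Definition jof (nz k : nat) : nat := (k %/ nz)%N.

Definition erow (R : realType) (nu j : nat) : 'rV[R]_nu :=
  \row_(l < nu) (l == j :> nat)%:R.

(** E^p_{mbar+1} : block row with p-th block (1-based) I_nu, zeros elsewhere
    (the zero block row when p is out of range 1..mbar+1). *)
Definition Eblk (R : realType) (nu mbar p : nat) : 'M[R]_(nu, mbar.+1 * nu) :=
  \matrix_(r < nu, c < mbar.+1 * nu) ((((c %/ nu)%N.+1 == p) && ((c %% nu)%N == r :> nat)))%:R.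

Definition ecol (R : realType) (nz i : nat) : 'cV[R]_nz :=
  \col_(r < nz) (r == i :> nat)%:R.

Definition mbar_of (K : nat) (m : 'I_K -> nat) : nat := \max_(k < K) m k.

Definition Ac_of (R : realType) (K : nat) (n : 'I_K -> nat)
  (Acb : forall k, 'M[R]_(n k)) : 'M[R]_(\sum_(k < K) n k) :=
  \mxdiag_(k < K) Acb k.

Definition V_of (R : realType) (K : nat) (n : 'I_K -> nat) (v : 'I_K -> R)
  : 'M[R]_(\sum_(k < K) n k) :=
  \mxdiag_(k < K) ((v k)%:M : 'M[R]_(n k)).

Definition B1c_of (R : realType) (nz nu : nat) (n : 'I_(nz * nu) -> nat)
  (Bc : forall k, 'cV[R]_(n k)) (m : 'I_(nz * nu) -> nat)
  : 'M[R]_(\sum_(k < nz * nu) n k, (mbar_of m).+1 * nu) :=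
  \mxcol_(k < nz * nu) (Bc k *m erow R nu (jof nz k) *m Eblk R nu (mbar_of m) (m k)).

Definition B2c_of (R : realType) (nz nu : nat) (n : 'I_(nz * nu) -> nat)
  (Bc : forall k, 'cV[R]_(n k)) (m : 'I_(nz * nu) -> nat)
  : 'M[R]_(\sum_(k < nz * nu) n k, (mbar_of m).+1 * nu) :=
  \mxcol_(k < nz * nu) (Bc k *m erow R nu (jof nz k) *m Eblk R nu (mbar_of m) (m k).+1).

(** C_c = [Cbar_1, ..., Cbar_nu], Cbar_j = diag(C_{c,1j}, ..., C_{c,nz j}) *)
Definition Cc_of (R : realType) (nz nu : nat) (n : 'I_(nz * nu) -> nat)
  (Cc : forall k, 'rV[R]_(n k)) : 'M[R]_(nz, \sum_(k < nz * nu) n k) :=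
  \mxrow_(k < nz * nu) (ecol R nz (iof nz k) *m Cc k).

(** D_o = [Dbar_1; ...; Dbar_nz], Dbar_i = sum_j D_{c,ij} e_j E^{m_ij} *)
Definition Do_of (R : realType) (nz nu : nat) (Dc : 'I_(nz * nu) -> R)
  (m : 'I_(nz * nu) -> nat) : 'M[R]_(nz, (mbar_of m).+1 * nu) :=
  \sum_(k < nz * nu)
     ecol R nz (iof nz k) *m (Dc k *: (erow R nu (jof nz k) *m Eblk R nu (mbar_of m) (m k))).

Section Generic.
Variables (R : realType) (nx nut : nat).

Definition H1c (Ac : 'M[R]_nx) (B1 : 'M[R]_(nx, nut)) : 'M[R]_(nx + nut) :=
  block_mx Ac B1 0 0.
Definition H2c (Ac V : 'M[R]_nx) (B1 B2 : 'M[R]_(nx, nut)) : 'M[R]_(nx + nut) :=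
  block_mx (V *m Ac) (V *m (B2 - B1)) 0 0.
Definition H3c (Ac V : 'M[R]_nx) : 'M[R]_(nx + nut) :=
  block_mx (V *m Ac) 0 0 0.
Definition Hc (Ac V : 'M[R]_nx) (B1 B2 : 'M[R]_(nx, nut))
  : 'M[R]_((nx + nut) + (nx + nut) + (nx + nut)) :=
  block_mx (block_mx (H1c Ac B1) 0 0 (H2c Ac V B1 B2)) 0 0 (H3c Ac V).

Definition E1 : 'M[R]_(nx + nut, (nx + nut) + (nx + nut) + (nx + nut)) :=
  row_mx (row_mx 1%:M 1%:M) (- 1%:M).
Definition E2 : 'M[R]_((nx + nut) + (nx + nut) + (nx + nut), nx + nut) :=
  col_mx (col_mx 1%:M 1%:M) 1%:M.

Definition Mbarc (nz : nat) (Cc : 'M[R]_(nz, nx)) (Do : 'M[R]_(nz, nut))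
  (Qc : 'M[R]_nz) : 'M[R]_(nx + nut, nz) :=
  - ((row_mx Cc Do)^T *m Qc).
Definition Qbarc (nz : nat) (Cc : 'M[R]_(nz, nx)) (Do : 'M[R]_(nz, nut))
  (Qc : 'M[R]_nz) : 'M[R]_(nx + nut) :=
  - (Mbarc Cc Do Qc *m row_mx Cc Do).

Definition Bo_s (Ac V : 'M[R]_nx) (B1 B2 : 'M[R]_(nx, nut)) (s : R)
  : 'M[R]_(nx, nut) :=
  mxint (fun r => expmx (r *: Ac) *m B1) 0 s
  + V *m mxint (fun r => expmx (r *: (V *m Ac)) *m (B2 - B1)) 0 s.

Definition Gam (Ac V : 'M[R]_nx) (B1 B2 : 'M[R]_(nx, nut)) (s : R)
  : 'M[R]_(nx + nut) :=
  block_mx (expmx (s *: Ac)) (Bo_s Ac V B1 B2 s) 0 1%:M.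

End Generic.

(* Main.v *)
Require Import Defs.
Set Warnings "-all".
From HB Require Import structures.
From mathcomp Require Import all_boot all_order all_algebra.
From mathcomp Require Import all_classical all_reals all_analysis.
From mathcomp Require Import ring lra.
Set Implicit Arguments. Unset Strict Implicit. Unset Printing Implicit Defensive.
Import Order.TTheory GRing.Theory Num.Theory.
Import numFieldNormedType.Exports.
Local Open Scope classical_set_scope.
Local Open Scope ring_scope.
Section Aux.
Variable R : realType.

Lemma cvg_mxP {T : Type} (F : set_system T) {FF : Filter F} m n
  (f : T -> 'M[R]_(m, n)) (l : 'M[R]_(m, n)) :
  f @ F --> l <-> forall i j, (fun x => f x i j) @ F --> l i j.
Proof.
split.
- move=> fl i j.
  exact: (continuous_cvg _ (@coord_continuous R m n i j l) fl).
- move=> H; apply/cvgrPdist_le => /= e e0.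
  near=> x.
  rewrite [leLHS]/Num.Def.normr/= mx_normrE (bigmax_le _ (ltW e0))//= => -[i j] _.
  rewrite !mxE/=.
  move: i j; near: x; apply: filter_forall => /= i; apply: filter_forall => /= j.
  exact: ((cvgrPdist_le _ _).1 (H i j)).
Unshelve. all: by end_near. Qed.


Lemma is_derive_mxP m n (F : R -> 'M[R]_(m, n)) (t : R) (D : 'M[R]_(m, n)) :
  is_derive t 1 F D <-> forall i j, is_derive t 1 (fun s => F s i j) (D i j).
Proof.
split.
- move=> [dF <-] i j.
  have dFij := (derivable_mxP F t 1).1 dF i j.
  apply: DeriveDef => //.
  by rewrite derive_mx // mxE.
- move=> H.
  have dF : derivable F t 1.
    by apply/derivable_mxP => i j; case: (H i j).
  apply: DeriveDef => //.
  rewrite derive_mx //; apply/matrixP => i j; rewrite mxE.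
  by case: (H i j) => _ ->.
Qed.

Lemma within_mxP m n (A : set R) (F : R -> 'M[R]_(m, n)) :
  {within A, continuous F} <->
  forall i j, {within A, continuous (fun s => F s i j)}.
Proof.
split.
- move=> /subspace_continuousP H i j; apply/subspace_continuousP => x Ax.
  by have /cvg_mxP := H x Ax; apply.
- move=> H; apply/subspace_continuousP => x Ax.
  apply/cvg_mxP => i j.
  by have /subspace_continuousP := H i j; apply.
Qed.

Lemma cvg_sumr {T : Type} (F : set_system T) {FF : Filter F} (I : Type)
  (r : seq I) (h : I -> T -> R) (l : I -> R) :
  (forall k, h k @ F --> l k) ->
  (fun x => \sum_(k <- r) h k x) @ F --> \sum_(k <- r) l k.
Proof.
move=> H; elim: r => [|k r IH].
  rewrite big_nil; under eq_cvg do rewrite big_nil; exact: cvg_cst.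
rewrite big_cons; under eq_cvg do rewrite big_cons.
exact: cvgD.
Qed.

Lemma cvg_mulmx {T : Type} (F : set_system T) {FF : Filter F} m n p
  (f : T -> 'M[R]_(m, n)) (g : T -> 'M[R]_(n, p)) (a : 'M[R]_(m, n)) (b : 'M[R]_(n, p)) :
  f @ F --> a -> g @ F --> b -> (fun x => f x *m g x) @ F --> a *m b.
Proof.
move=> /cvg_mxP fa /cvg_mxP gb; apply/cvg_mxP => i j.
rewrite mxE.
have -> : (fun x => (f x *m g x) i j) = (fun x => \sum_k f x i k * g x k j).
  by apply/funext => x; rewrite mxE.
apply: cvg_sumr => k; exact: cvgM.
Qed.


Lemma is_derive_mulmx m n p (F : R -> 'M[R]_(m, n)) (G : R -> 'M[R]_(n, p))
  (t : R) dF dG :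
  is_derive t 1 F dF -> is_derive t 1 G dG ->
  is_derive t 1 (fun s => F s *m G s) (dF *m G t + F t *m dG).
Proof.
move=> /is_derive_mxP HF /is_derive_mxP HG; apply/is_derive_mxP => i j.
rewrite (_ : (fun s => (F s *m G s) i j) =
   (fun s => \sum_k F s i k * G s k j)); last first.
  by apply/funext => s; rewrite mxE.
have := (@is_derive_sum _ R^o R^o n (fun k s => F s i k * G s k j) t 1).
move=> /(_ _ (fun k => is_deriveM (HF i k) (HG k j))) H.
rewrite fct_sumE in H.
apply: (is_derive_eq H).
rewrite !mxE -big_split /=; apply: eq_bigr => k _.
rewrite addrC; congr (_ + _); exact: mulrC.
Qed.

Lemma is_derive_scalef m n (k : R -> R) (F : R -> 'M[R]_(m, n)) (t : R) dk dF :
  is_derive t 1 k dk -> is_derive t 1 F dF ->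
  is_derive t 1 (fun s => k s *: F s) (dk *: F t + k t *: dF).
Proof.
move=> Hk /is_derive_mxP HF; apply/is_derive_mxP => i j.
rewrite (_ : (fun s => (k s *: F s) i j) = (fun s => k s * F s i j)); last first.
  by apply/funext => s; rewrite mxE.
have H := is_deriveM Hk (HF i j).
apply: (is_derive_eq H).
rewrite !mxE addrC; congr (_ + _); exact: mulrC.
Qed.

Lemma is_derive_block m1 m2 n1 n2 (F1 : R -> 'M[R]_(m1, n1))
  (F2 : R -> 'M[R]_(m1, n2)) (F3 : R -> 'M[R]_(m2, n1)) (F4 : R -> 'M[R]_(m2, n2))
  (t : R) (d1 : 'M[R]_(m1, n1)) (d2 : 'M[R]_(m1, n2)) (d3 : 'M[R]_(m2, n1))
  (d4 : 'M[R]_(m2, n2)) :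
  is_derive t 1 F1 d1 -> is_derive t 1 F2 d2 ->
  is_derive t 1 F3 d3 -> is_derive t 1 F4 d4 ->
  is_derive t 1 (fun s => block_mx (F1 s) (F2 s) (F3 s) (F4 s))
    (block_mx d1 d2 d3 d4).
Proof.
move=> /is_derive_mxP H1 /is_derive_mxP H2 /is_derive_mxP H3 /is_derive_mxP H4.
apply/is_derive_mxP => i j.
case: (split_ordP i) => i' ->; case: (split_ordP j) => j' ->.
- rewrite block_mxEul.
  rewrite (_ : (fun s => _) = (fun s => F1 s i' j')) //.
  by apply/funext => s; rewrite block_mxEul.
- rewrite block_mxEur.
  rewrite (_ : (fun s => _) = (fun s => F2 s i' j')) //.
  by apply/funext => s; rewrite block_mxEur.
- rewrite block_mxEdl.
  rewrite (_ : (fun s => _) = (fun s => F3 s i' j')) //.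
  by apply/funext => s; rewrite block_mxEdl.
- rewrite block_mxEdr.
  rewrite (_ : (fun s => _) = (fun s => F4 s i' j')) //.
  by apply/funext => s; rewrite block_mxEdr.
Qed.

Lemma within_block m1 m2 n1 n2 (A : set R) (F1 : R -> 'M[R]_(m1, n1))
  (F2 : R -> 'M[R]_(m1, n2)) (F3 : R -> 'M[R]_(m2, n1)) (F4 : R -> 'M[R]_(m2, n2)) :
  {within A, continuous F1} -> {within A, continuous F2} ->
  {within A, continuous F3} -> {within A, continuous F4} ->
  {within A, continuous (fun s => block_mx (F1 s) (F2 s) (F3 s) (F4 s))}.
Proof.
move=> /within_mxP H1 /within_mxP H2 /within_mxP H3 /within_mxP H4.
apply/within_mxP => i j.
case: (split_ordP i) => i' ->; case: (split_ordP j) => j' ->.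
- rewrite (_ : (fun s => _) = (fun s => F1 s i' j')) //.
  by apply/funext => s; rewrite block_mxEul.
- rewrite (_ : (fun s => _) = (fun s => F2 s i' j')) //.
  by apply/funext => s; rewrite block_mxEur.
- rewrite (_ : (fun s => _) = (fun s => F3 s i' j')) //.
  by apply/funext => s; rewrite block_mxEdl.
- rewrite (_ : (fun s => _) = (fun s => F4 s i' j')) //.
  by apply/funext => s; rewrite block_mxEdr.
Qed.

Lemma within_mulmx m n p (A : set R) (F : R -> 'M[R]_(m, n)) (G : R -> 'M[R]_(n, p)) :
  {within A, continuous F} -> {within A, continuous G} ->
  {within A, continuous (fun s => F s *m G s)}.
Proof.
move=> /subspace_continuousP HF /subspace_continuousP HG.
apply/subspace_continuousP => x Ax.
exact: cvg_mulmx (HF x Ax) (HG x Ax).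
Qed.


Lemma sub_itv0 (t T : R) : t <= T -> `[0, t] `<=` `[0, T].
Proof.
move=> tT x /=; rewrite !in_itv /= => /andP[x0 xt].
by rewrite x0 (le_trans xt tT).
Qed.

Lemma cst_mx (T : R) m n (F : R -> 'M[R]_(m, n)) :
  {within `[0, T], continuous F} ->
  (forall t, 0 < t < T -> is_derive t 1 F 0) ->
  forall t, 0 <= t <= T -> F t = F 0.
Proof.
move=> cF dF t /andP[t0 tT].
move: t0; rewrite le_eqVlt => /predU1P[<-//|t0].
apply/matrixP => i j; apply/eqP; rewrite -subr_eq0; apply/eqP.
have [||c _ ->] := @MVT R (fun s => F s i j) (fun _ => 0) 0 t t0.
- move=> x; rewrite in_itv /= => /andP[x0 xt].
  have := (is_derive_mxP _ _ _).1 (dF x _) i j; rewrite mxE; apply.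
  by rewrite x0 (lt_le_trans xt tT).
- have := (within_mxP _ _).1 (continuous_subspaceW (sub_itv0 tT) cF) i j.
  by [].
- by rewrite mul0r.
Qed.

Lemma ftc_mx (T : R) p q (F G : R -> 'M[R]_(p, q)) :
  solves_on T F G -> {within `[0, T], continuous G} ->
  forall t, 0 < t <= T -> mxint G 0 t = F t - F 0.
Proof.
move=> [cF dF] cG t /andP[t0 tT].
apply/matrixP => i j; rewrite !mxE.
have cFt := (within_mxP _ _).1 (continuous_subspaceW (sub_itv0 tT) cF) i j.
have cGt := (within_mxP _ _).1 (continuous_subspaceW (sub_itv0 tT) cG) i j.
have dFij : forall x, 0 < x < t -> is_derive x 1 (fun s => F s i j) (G x i j).
  move=> x /andP[x0 xt].
  by apply: ((is_derive_mxP _ _ _).1 (dF x _)); rewrite x0 (lt_le_trans xt tT).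
have := @continuous_FTC2 R (fun s => G s i j) (fun s => F s i j) 0 t t0 cGt.
case/(continuous_within_itvP _ t0): cFt => _ c0 ct.
have H : derivable_oo_LRcontinuous (fun s => F s i j) 0 t.
  split => //; move=> x; rewrite in_itv /= => /dFij H.
  by case: H.
move=> /(_ H) {H}.
have H : {in `]0, t[, (fun s => F s i j)^`()%classic =1 (fun s => G s i j)}.
  move=> x; rewrite in_itv /= => /dFij H.
  by rewrite derive1E; apply: derive_val.
move=> /(_ H) {H}.
by rewrite /Rintegral => ->.
Qed.

Lemma mxint_ext p q (f g : R -> 'M[R]_(p, q)) a b :
  (forall t, a <= t <= b -> f t = g t) -> mxint f a b = mxint g a b.
Proof.
move=> H; apply/matrixP => i j; rewrite !mxE; apply: eq_Rintegral => x.
rewrite inE /= in_itv /= => /H ->; done.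
Qed.

Lemma within_sumr (A : set R) (I : Type) (r : seq I) (f : I -> R -> R) :
  (forall k, {within A, continuous (f k)}) ->
  {within A, continuous (fun x => \sum_(k <- r) f k x)}.
Proof.
move=> H; apply/subspace_continuousP => x Ax.
apply: cvg_sumr => k.
by have /subspace_continuousP := H k; apply.
Qed.

Lemma Rint_sum (a b : R) (I : Type) (r : seq I) (f : I -> R -> R) :
  (forall k, {within `[a, b], continuous (f k)}) ->
  \int[lebesgue_measure]_(x in `[a, b]) (\sum_(k <- r) f k x) =
  \sum_(k <- r) \int[lebesgue_measure]_(x in `[a, b]) f k x.
Proof.
move=> H; elim: r => [|k r IH].
  rewrite big_nil; under eq_Rintegral do rewrite big_nil.
  by rewrite Rintegral_cst ?mul0r.
rewrite big_cons; under eq_Rintegral do rewrite big_cons.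
rewrite RintegralD //.
- by rewrite IH.
- by apply: continuous_compact_integrable => //; exact: segment_compact.
- apply: continuous_compact_integrable; first exact: segment_compact.
  exact: within_sumr.
Qed.

Lemma mxint_mull p q r (V : 'M[R]_(p, q)) (g : R -> 'M[R]_(q, r)) a b :
  {within `[a, b], continuous g} ->
  mxint (fun t => V *m g t) a b = V *m mxint g a b.
Proof.
move=> /within_mxP cg; apply/matrixP => i j; rewrite !mxE.
under eq_Rintegral do rewrite mxE.
rewrite Rint_sum; last first.
  move=> k; apply/subspace_continuousP => x Ax.
  apply: cvgM; first exact: cvg_cst.
  by have /subspace_continuousP := cg k j; apply.
apply: eq_bigr => k _; rewrite mxE RintegralZl //.
by apply: continuous_compact_integrable => //; exact: segment_compact.
Qed.


Lemma ler_mx_entry m n (A : 'M[R]_(m, n)) i j : `|A i j| <= `|A|.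
Proof.
rewrite [in leRHS]/Num.Def.normr/= mx_normrE.
apply: le_trans; last exact: (le_bigmax _ _ (i, j)).
by [].
Qed.

Lemma cvg_pseries_bound (c : R^nat) (C b x : R) :
  0 <= C -> 0 <= b -> (forall k, `|c k| <= C * (b ^+ k / k`!%:R)) ->
  cvgn (pseries c x).
Proof.
move=> C0 b0 Hc; apply: normed_cvg.
apply: (@series_le_cvg _ _ (fun k => C * ((b * `|x|) ^+ k / k`!%:R))).
- by move=> k /=.
- move=> k; rewrite mulr_ge0 // divr_ge0 //.
  by rewrite exprn_ge0 // mulr_ge0.
- move=> k /=; rewrite normrM normrX exprMn.
  rewrite mulrAC mulrA; apply: ler_wpM2r; first by rewrite exprn_ge0.
  exact: Hc.
- have -> : (fun k => C * ((b * `|x|) ^+ k / k`!%:R)) = C *: exp_coeff (b * `|x|).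
    by apply/funext => k.
  exact/is_cvg_seriesZ/is_cvg_series_exp_coeff.
Qed.

Lemma diffs_bound (c : R^nat) (C b : R) :
  (forall k, `|c k| <= C * (b ^+ k / k`!%:R)) ->
  forall k, `|pseries_diffs c k| <= (C * b) * (b ^+ k / k`!%:R).
Proof.
move=> Hc k; rewrite /pseries_diffs normrM ger0_norm //.
have := Hc k.+1; rewrite factS natrM invfM exprS.
have kp : 0 < k.+1%:R :> R by rewrite ltr0n.
move=> H; rewrite -(ler_pM2l kp) in H.
apply: (le_trans H) => {H}.
rewrite le_eqVlt; apply/orP; left; apply/eqP.
  field; rewrite pnatr_eq0 -lt0n fact_gt0 /=; rewrite -natr1 addrC in kp; by rewrite gt_eqF.
Qed.

Lemma is_derive_pseries_bound (c : R^nat) (C b x : R) :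
  0 <= C -> 0 <= b -> (forall k, `|c k| <= C * (b ^+ k / k`!%:R)) ->
  is_derive x 1 (fun y => limn (pseries c y)) (limn (pseries (pseries_diffs c) x)).
Proof.
move=> C0 b0 Hc.
have H1 := diffs_bound Hc.
have H2 := diffs_bound H1.
apply: (@pseries_snd_diffs _ _ (`|x| + 1)).
- exact: (cvg_pseries_bound C0 b0).
- by apply: (cvg_pseries_bound _ b0 H1); rewrite mulr_ge0.
- by apply: (cvg_pseries_bound _ b0 H2); rewrite !mulr_ge0.
- by rewrite [ltRHS]ger0_norm ?ltrDl // addr_ge0.
Qed.


Section Expmx.
Variable n : nat.
Implicit Types A B : 'M[R]_n.

Definition cf A (i j : 'I_n) (k : nat) : R := (k`!%:R)^-1 * (A ^+ k) i j.

Lemma powmx_bound A k i j : `|(A ^+ k) i j| <= (n%:R * `|A|) ^+ k.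
Proof.
elim: k i j => [|k IH] i j.
  rewrite !expr0 mxE; case: (i == j); rewrite /= ?normr1 ?normr0 //.
rewrite exprS -mulmxE mxE.
apply: le_trans (ler_norm_sum _ _ _) _.
apply: le_trans (_ : \sum_(l < n) `|A| * (n%:R * `|A|) ^+ k <= _).
  apply: ler_sum => l _; rewrite normrM; apply: ler_pM => //.
  exact: ler_mx_entry.
by rewrite sumr_const card_ord -[_ *+ n]mulr_natl exprS mulrA.
Qed.

Lemma cf_bound A i j k : `|cf A i j k| <= 1 * ((n%:R * `|A|) ^+ k / k`!%:R).
Proof.
rewrite mul1r /cf normrM mulrC [`|_^-1|]ger0_norm ?invr_ge0 //.
by apply: ler_wpM2r; [rewrite invr_ge0 | exact: powmx_bound].
Qed.

Lemma cvg_cf A i j x : cvgn (pseries (cf A i j) x).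
Proof.
by apply: (cvg_pseries_bound _ _ (@cf_bound A i j)); rewrite ?mulr_ge0.
Qed.

Lemma scale_powmx (t : R) A k : (t *: A) ^+ k = t ^+ k *: A ^+ k.
Proof.
elim: k => [|k IH]; first by rewrite !expr0 scale1r.
by rewrite !exprS -!mulmxE IH -!scalemxAl -scalemxAr scalerA.
Qed.

Lemma expmx_entry A (t : R) :
  expmx (t *: A) = \matrix_(i, j) limn (pseries (cf A i j) t).
Proof.
rewrite /expmx; apply: cvg_lim => //.
apply/cvg_mxP => i j; rewrite mxE.
rewrite (_ : (fun x => _) = pseries (cf A i j) t); first exact: cvg_cf.
apply/funext => N; rewrite /series /pseries /= summxE.
apply: eq_bigr => k _; rewrite scale_powmx !mxE /cf.
by rewrite -mulrA [t ^+ k * _]mulrC.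
Qed.

Lemma lim_pseries_sum (I : finType) (a : I -> R) (c : I -> R^nat) (x : R) :
  (forall l, cvgn (pseries (c l) x)) ->
  limn (pseries (fun k => \sum_l a l * c l k) x) =
  \sum_l a l * limn (pseries (c l) x).
Proof.
move=> H; apply: cvg_lim => //.
rewrite (_ : pseries _ x = fun N => \sum_l a l * pseries (c l) x N).
  apply: cvg_sumr => l; apply: cvgM; [exact: cvg_cst | exact: H].
apply/funext => N; rewrite /pseries /series /=.
under eq_bigr do rewrite mulr_suml.
rewrite exchange_big /=; apply: eq_bigr => l _.
by rewrite mulr_sumr; apply: eq_bigr => k _; rewrite mulrA.
Qed.

Lemma expmx_commute A B (t : R) :
  A *m B = B *m A -> expmx (t *: A) *m B = B *m expmx (t *: A).
Proof.
move=> AB; rewrite expmx_entry; apply/matrixP => i j; rewrite !mxE.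
under eq_bigr do rewrite mxE mulrC.
under [RHS]eq_bigr do rewrite mxE.
rewrite -!lim_pseries_sum; try by move=> l; exact: cvg_cf.
congr (limn (pseries _ t)); apply/funext => k.
have ABk : A ^+ k *m B = B *m A ^+ k.
  rewrite !mulmxE; apply/esym/commrX; rewrite /GRing.comm -!mulmxE.
  by rewrite AB.
have := congr1 (fun M : 'M[R]_n => M i j) ABk; rewrite !mxE => E.
rewrite /cf.
under eq_bigr do rewrite mulrCA.
under [RHS]eq_bigr do rewrite mulrCA.
by rewrite -!mulr_sumr; congr (_ * _); rewrite -E; apply: eq_bigr => l _; rewrite mulrC.
Qed.

Lemma expmx_comm A (t : R) : expmx (t *: A) *m A = A *m expmx (t *: A).
Proof. exact: expmx_commute. Qed.

Lemma is_derive_expmx A (t : R) :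
  is_derive t 1 (fun s => expmx (s *: A)) (A *m expmx (t *: A)).
Proof.
rewrite (_ : (fun s => expmx (s *: A)) =
  fun s => \matrix_(i, j) limn (pseries (cf A i j) s)); last first.
  by apply/funext => s; rewrite expmx_entry.
apply/is_derive_mxP => i j.
rewrite (_ : (fun s => _) = fun s => limn (pseries (cf A i j) s)); last first.
  by apply/funext => s; rewrite mxE.
have b0 : 0 <= n%:R * `|A| by rewrite mulr_ge0.
have H := @is_derive_pseries_bound (cf A i j) 1 _ t ler01 b0 (@cf_bound A i j).
apply: (is_derive_eq H).
rewrite expmx_entry mxE.
  rewrite (_ : pseries_diffs (cf A i j) = fun k => \sum_l A i l * cf A l j k).
    rewrite lim_pseries_sum; last by move=> l; exact: cvg_cf.
    by apply: eq_bigr => l _; rewrite mxE.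
  apply/funext => k.
  have hf := congr1 (fun f => f k) (@pseries_diffs_inv_fact R).
  rewrite /pseries_diffs /= in hf.
  rewrite /pseries_diffs /cf exprS -mulmxE mxE mulrA hf mulr_sumr.
  by apply: eq_bigr => l _; rewrite mulrCA.
Qed.

Lemma expmx0 A : expmx (0 *: A) = 1%:M.
Proof.
rewrite expmx_entry; apply/matrixP => i j; rewrite !mxE.
apply: lim_near_cst => //.
near=> N; rewrite -[N]prednK; last by near: N.
rewrite /pseries /series /= big_nat_recl //= big1 ?addr0.
  by rewrite /cf !expr0 mulr1 fact0 invr1 mul1r mxE.
by move=> k _; rewrite expr0n /= mulr0.
Unshelve. all: by end_near. Qed.

Lemma expmx_cont A : continuous (fun s : R => expmx (s *: A)).
Proof.
move=> x; apply: differentiable_continuous; apply/derivable1_diffP.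
by case: (is_derive_expmx A x).
Qed.

End Expmx.


Lemma within_cst m n (A : set R) (C : 'M[R]_(m, n)) :
  {within A, continuous (fun _ : R => C)}.
Proof. apply/subspace_continuousP => x _; exact: cvg_cst. Qed.

Lemma within_D m n (A : set R) (F G : R -> 'M[R]_(m, n)) :
  {within A, continuous F} -> {within A, continuous G} ->
  {within A, continuous (fun s => F s + G s)}.
Proof.
move=> /subspace_continuousP HF /subspace_continuousP HG.
apply/subspace_continuousP => x Ax; exact: cvgD (HF x Ax) (HG x Ax).
Qed.

Lemma within_N m n (A : set R) (F : R -> 'M[R]_(m, n)) :
  {within A, continuous F} -> {within A, continuous (fun s => - F s)}.
Proof.
move=> /subspace_continuousP HF.
apply/subspace_continuousP => x Ax; exact: cvgN (HF x Ax).
Qed.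

Lemma within_expmx n (A : set R) (M : 'M[R]_n) :
  {within A, continuous (fun s => expmx (s *: M))}.
Proof. exact/continuous_subspaceT/expmx_cont. Qed.

Lemma ode_unique (T : R) n q (A : 'M[R]_n) (F : R -> 'M[R]_(n, q)) :
  solves_on T F (fun t => A *m F t) ->
  forall t, 0 <= t <= T -> F t = expmx (t *: A) *m F 0.
Proof.
move=> [cF dF] t tin.
have EA s : expmx (s *: - A) *m A = A *m expmx (s *: - A).
  apply: oppr_inj; rewrite -mulmxN -mulNmx; exact: expmx_comm.
have G0 : expmx (t *: - A) *m F t = F 0.
  have c1 : {within `[0, T], continuous (fun s => expmx (s *: - A) *m F s)}.
    apply: within_mulmx; [exact: within_expmx | exact: cF].
  have d1 : forall s, 0 < s < T ->
      is_derive s 1 (fun s => expmx (s *: - A) *m F s) 0.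
    move=> s sin.
    apply: (is_derive_eq (is_derive_mulmx (is_derive_expmx (- A) s) (dF s sin))).
    by rewrite !mulNmx mulmxA EA addNr.
  have := cst_mx c1 d1 tin; rewrite /= => ->.
  by rewrite expmx0 mul1mx.
have K : expmx (t *: A) *m expmx (t *: - A) = 1%:M.
  have c1 : {within `[0, T], continuous
      (fun s => expmx (s *: A) *m expmx (s *: - A))}.
    apply: within_mulmx; exact: within_expmx.
  have d1 : forall s, 0 < s < T ->
      is_derive s 1 (fun s => expmx (s *: A) *m expmx (s *: - A)) 0.
    move=> s sin.
    apply: (is_derive_eq (is_derive_mulmx (is_derive_expmx A s) (is_derive_expmx (- A) s))).
    by rewrite mulNmx mulmxN mulmxA expmx_comm subrr.
  have := cst_mx c1 d1 tin; rewrite /= => ->.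
  by rewrite !expmx0 mul1mx.
by rewrite -G0 mulmxA K mul1mx.
Qed.

Lemma ode_unique2 (T : R) n q (A : 'M[R]_n) (F1 F2 : R -> 'M[R]_(n, q)) :
  solves_on T F1 (fun t => A *m F1 t) -> solves_on T F2 (fun t => A *m F2 t) ->
  F1 0 = F2 0 -> forall t, 0 <= t <= T -> F1 t = F2 t.
Proof.
move=> H1 H2 E t tin.
by rewrite (ode_unique H1 tin) (ode_unique H2 tin) E.
Qed.

Lemma int_ident (T : R) n p (A : 'M[R]_n) (X : R -> 'M[R]_n)
  (Y : R -> 'M[R]_(n, p)) (C : 'M[R]_(n, p)) :
  solves_on T X (fun t => A *m X t) -> X 0 = 1%:M ->
  solves_on T Y (fun t => X t *m C) -> Y 0 = 0 ->
  forall t, 0 <= t <= T -> A *m Y t + C = X t *m C.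
Proof.
move=> [cX dX] X0 [cY dY] Y0 t tin.
apply/eqP; rewrite -subr_eq0; apply/eqP.
have c1 : {within `[0, T], continuous (fun s => A *m Y s + C - X s *m C)}.
  apply: within_D; first apply: within_D.
  + apply: within_mulmx; [exact: within_cst | exact: cY].
  + exact: within_cst.
  + by apply: within_N; apply: within_mulmx; [exact: cX | exact: within_cst].
have d1 : forall s, 0 < s < T ->
    is_derive s 1 (fun s => A *m Y s + C - X s *m C) 0.
  move=> s sin.
  have H1 := is_derive_mulmx (is_derive_cst A s 1) (dY s sin).
  have H2 := is_derive_mulmx (dX s sin) (is_derive_cst C s 1).
  have H3 := is_deriveB (is_deriveD H1 (is_derive_cst C s 1)) H2.
  apply: (is_derive_eq H3).
  by rewrite mul0mx add0r mulmx0 addr0 addr0 mulmxA subrr.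
have := cst_mx c1 d1 tin; rewrite /= => ->.
by rewrite X0 Y0 mulmx0 add0r mul1mx subrr.
Qed.


Lemma trZ m n (a : R) (M : 'M[R]_(m, n)) : (a *: M)^T = a *: M^T.
Proof. by apply/matrixP => i j; rewrite !mxE. Qed.

Lemma within_tr m n (A : set R) (F : R -> 'M[R]_(m, n)) :
  {within A, continuous F} -> {within A, continuous (fun s => (F s)^T)}.
Proof.
move=> /within_mxP H; apply/within_mxP => i j.
rewrite (_ : (fun s => _) = fun s => F s j i) //.
by apply/funext => s; rewrite mxE.
Qed.

Lemma within_scalef m n (A : set R) (k : R -> R) (F : R -> 'M[R]_(m, n)) :
  {within A, continuous k} -> {within A, continuous F} ->
  {within A, continuous (fun s => k s *: F s)}.
Proof.
move=> /subspace_continuousP Hk /subspace_continuousP HF.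
apply/subspace_continuousP => x Ax; exact: cvgZ (Hk x Ax) (HF x Ax).
Qed.

Lemma is_derive_expc (c t : R) :
  is_derive t 1 (fun s => expR (- (c * s))) (- c * expR (- (c * t))).
Proof.
have H1 : is_derive t 1 (fun s : R => - (c * s)) (- c).
  have := is_deriveN (is_deriveZ c (is_derive_id t (1 : R))).
  by rewrite /GRing.scale /= mulr1.
have H2 := @is_derive1_comp R expR (fun s => - (c * s)) t _ _ (is_derive_expR _) H1.
by apply: (is_derive_eq H2); rewrite mulrC.
Qed.

Lemma within_expc (A : set R) (c : R) :
  {within A, continuous (fun s => expR (- (c * s)))}.
Proof.
apply: continuous_subspaceT => x.
apply: differentiable_continuous; apply/derivable1_diffP.
by case: (is_derive_expc c x).
Qed.

Lemma mxint0 p q (f : R -> 'M[R]_(p, q)) a : mxint f a a = 0.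
Proof.
apply/matrixP => i j; rewrite !mxE set_itv1.
exact: Rintegral_set1.
Qed.


Lemma psi_lemma nx nut (Ac V : 'M[R]_nx) (B1 B2 : 'M[R]_(nx, nut)) (Ts c : R)
  (Af Avf : R -> 'M[R]_nx) (B1f B2f : R -> 'M[R]_(nx, nut))
  (H : R -> 'M[R]_((nx + nut) + (nx + nut) + (nx + nut))) :
  solves_on Ts Af (fun t => Ac *m Af t) -> Af 0 = 1%:M ->
  solves_on Ts Avf (fun t => (V *m Ac) *m Avf t) -> Avf 0 = 1%:M ->
  solves_on Ts B1f (fun t => Af t *m B1) -> B1f 0 = 0 ->
  solves_on Ts B2f (fun t => Avf t *m (V *m (B2 - B1))) -> B2f 0 = 0 ->
  solves_on Ts H (fun t => (Hc Ac V B1 B2 - c%:M) *m H t) -> H 0 = 1%:M ->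
  forall t, 0 <= t <= Ts ->
  E1 R nx nut *m H t *m E2 R nx nut =
    expR (- (c * t)) *: block_mx (Af t) (B1f t + B2f t) 0 1%:M.
Proof.
move=> sAf Af0 sAvf Avf0 sB1 B10 sB2 B20 sH H0 t tin.
have [cAf dAf] := sAf; have [cAvf dAvf] := sAvf.
have [cB1 dB1] := sB1; have [cB2 dB2] := sB2.
pose Phi1 s := block_mx (Af s) (B1f s) 0 (1%:M : 'M[R]_nut).
pose Phi2 s := block_mx (Avf s) (B2f s) 0 (1%:M : 'M[R]_nut).
pose Phi3 s := block_mx (Avf s) (0 : 'M[R]_(nx, nut)) 0 (1%:M : 'M[R]_nut).
pose Phi s := block_mx (block_mx (Phi1 s) 0 0 (Phi2 s)) 0 0 (Phi3 s).
pose Psi s := expR (- (c * s)) *: Phi s.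
have I1 := int_ident sAf Af0 sB1 B10.
have I2 := int_ident sAvf Avf0 sB2 B20.
have sPsi : solves_on Ts Psi (fun s => (Hc Ac V B1 B2 - c%:M) *m Psi s).
  split.
    apply: within_scalef; first exact: within_expc.
    apply: within_block; try exact: within_cst.
      apply: within_block; try exact: within_cst.
        by apply: within_block; try exact: within_cst.
      by apply: within_block; try exact: within_cst.
    by apply: within_block; try exact: within_cst.
  move=> s sin.
  have sin' : 0 <= s <= Ts by case/andP: sin => /ltW -> /ltW ->.
  have dPhi : is_derive s 1 Phi
     (block_mx (block_mx (block_mx (Ac *m Af s) (Af s *m B1) 0 0) 0 0
          (block_mx ((V *m Ac) *m Avf s) (Avf s *m (V *m (B2 - B1))) 0 0)) 0 0
       (block_mx ((V *m Ac) *m Avf s) 0 0 0)).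
    apply: is_derive_block; try exact: is_derive_cst.
      apply: is_derive_block; try exact: is_derive_cst.
        apply: is_derive_block; try exact: is_derive_cst.
          exact: dAf.
        exact: dB1.
      apply: is_derive_block; try exact: is_derive_cst.
        exact: dAvf.
      exact: dB2.
    apply: is_derive_block; try exact: is_derive_cst.
    exact: dAvf.
  apply: (is_derive_eq (is_derive_scalef (is_derive_expc c s) dPhi)).
  have HcPhi : Hc Ac V B1 B2 *m Phi s =
     block_mx (block_mx (block_mx (Ac *m Af s) (Af s *m B1) 0 0) 0 0
          (block_mx ((V *m Ac) *m Avf s) (Avf s *m (V *m (B2 - B1))) 0 0)) 0 0
       (block_mx ((V *m Ac) *m Avf s) 0 0 0).
    rewrite /Hc /H1c /H2c /H3c /Phi /Phi1 /Phi2 /Phi3.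
    rewrite !mulmx_block !mulmx0 !mul0mx !addr0 !add0r !mulmx1.
    by rewrite I1 // I2.
  rewrite mulmxBl -scalemxAr HcPhi mul_scalar_mx scalerA mulNr scaleNr addrC.
  by [].
have Psi0 : Psi 0 = 1%:M.
  rewrite /Psi mulr0 oppr0 expR0 scale1r /Phi /Phi1 /Phi2 /Phi3.
  by rewrite Af0 B10 Avf0 B20 -!scalar_mx_block.
rewrite (ode_unique2 sH sPsi _ tin); last by rewrite H0 Psi0.
rewrite /Psi -scalemxAr -scalemxAl; congr (_ *: _).
rewrite /E1 /E2 /Phi /Phi1 /Phi2 /Phi3.
rewrite !mul_row_block !mulmx0 !addr0 !mul1mx !add0r mul_row_col !mulmx1.
rewrite mul_row_col !mulmx1 mulNmx mul1mx.
rewrite add_block_mx opp_block_mx add_block_mx.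
by rewrite addrK !oppr0 !addr0 addrK.
Qed.


Lemma main_generic nx nut nz (Ac V : 'M[R]_nx) (B1 B2 : 'M[R]_(nx, nut))
  (Ccm : 'M[R]_(nz, nx)) (Do : 'M[R]_(nz, nut)) (Qc : 'M[R]_nz) (mu Ts : R)
  (Af Avf : R -> 'M[R]_nx) (B1f B2f : R -> 'M[R]_(nx, nut))
  (Hqf Hmf : R -> 'M[R]_((nx + nut) + (nx + nut) + (nx + nut)))
  (Qf : R -> 'M[R]_(nx + nut)) (Mf : R -> 'M[R]_(nx + nut, nz)) :
  0 < Ts -> V *m Ac = Ac *m V ->
  let B2bar := V *m (B2 - B1) in
  let Hcq := Hc Ac V B1 B2 - (mu / 2)%:M in
  let Hcm := Hc Ac V B1 B2 - mu%:M in
  let Gq := fun t => E1 R nx nut *m Hqf t *m E2 R nx nut in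
  let Gm := fun t => E1 R nx nut *m Hmf t *m E2 R nx nut in
  let Mbar := Mbarc Ccm Do Qc in
  let Qbar := Qbarc Ccm Do Qc in
  solves_on Ts Af (fun t => Ac *m Af t) -> Af 0 = 1%:M ->
  solves_on Ts Avf (fun t => (V *m Ac) *m Avf t) -> Avf 0 = 1%:M ->
  solves_on Ts B1f (fun t => Af t *m B1) -> B1f 0 = 0 ->
  solves_on Ts B2f (fun t => Avf t *m B2bar) -> B2f 0 = 0 ->
  solves_on Ts Hqf (fun t => Hcq *m Hqf t) -> Hqf 0 = 1%:M ->
  solves_on Ts Hmf (fun t => Hcm *m Hmf t) -> Hmf 0 = 1%:M ->
  solves_on Ts Qf (fun t => (Gq t)^T *m Qbar *m Gq t) -> Qf 0 = 0 ->
  solves_on Ts Mf (fun t => (Gm t)^T *m Mbar) -> Mf 0 = 0 ->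
  [/\ Af Ts = expmx (Ts *: Ac),
      B1f Ts + B2f Ts =
        mxint (fun t => expmx (t *: Ac) *m B1) 0 Ts
        + V *m mxint (fun t => expmx (t *: (V *m Ac)) *m (B2 - B1)) 0 Ts,
      Qf Ts = mxint (fun s => expR (- (mu * s)) *:
                 ((Gam Ac V B1 B2 s)^T *m Qbar *m Gam Ac V B1 B2 s)) 0 Ts
    & Mf Ts = mxint (fun s => expR (- (mu * s)) *:
                 ((Gam Ac V B1 B2 s)^T *m Mbar)) 0 Ts].
Proof.
move=> Ts0 VAc B2bar Hcq Hcm Gq Gm Mbar Qbar sAf Af0 sAvf Avf0 sB1 B10 sB2 B20
  sHq Hq0 sHm Hm0 sQ Q0 sM M0.
have TsI : 0 <= Ts <= Ts by rewrite lexx ltW.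
have [cAf dAf] := sAf; have [cAvf dAvf] := sAvf.
have hAf : forall t, 0 <= t <= Ts -> Af t = expmx (t *: Ac).
  by move=> t tin; rewrite (ode_unique sAf tin) Af0 mulmx1.
have hAvf : forall t, 0 <= t <= Ts -> Avf t = expmx (t *: (V *m Ac)).
  by move=> t tin; rewrite (ode_unique sAvf tin) Avf0 mulmx1.
have hB1 : forall t, 0 <= t <= Ts ->
    B1f t = mxint (fun s => expmx (s *: Ac) *m B1) 0 t.
  move=> t /andP[t0 tT]; move: t0; rewrite le_eqVlt => /predU1P[<-|t0].
    by rewrite mxint0 B10.
  have c1 : {within `[0, Ts], continuous (fun s => Af s *m B1)}.
    by apply: within_mulmx; [exact: cAf | exact: within_cst].
  have := ftc_mx sB1 c1 (t := t); rewrite t0 tT B10 subr0 => <- //.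
  apply: mxint_ext => s /andP[s0 st]; rewrite hAf //.
  by rewrite s0 (le_trans st tT).
have VV : (V *m Ac) *m V = V *m (V *m Ac) by rewrite -mulmxA -VAc mulmxA.
have hB2 : forall t, 0 <= t <= Ts ->
    B2f t = V *m mxint (fun s => expmx (s *: (V *m Ac)) *m (B2 - B1)) 0 t.
  move=> t /andP[t0 tT]; move: t0; rewrite le_eqVlt => /predU1P[<-|t0].
    by rewrite mxint0 B20 mulmx0.
  have c1 : {within `[0, Ts], continuous (fun s => Avf s *m B2bar)}.
    by apply: within_mulmx; [exact: cAvf | exact: within_cst].
  have := ftc_mx sB2 c1 (t := t); rewrite t0 tT B20 subr0 => <- //.
  rewrite -mxint_mull; last first.
    by apply: within_mulmx; [exact: within_expmx | exact: within_cst].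
  apply: mxint_ext => s /andP[s0 st]; rewrite hAvf; last first.
    by rewrite s0 (le_trans st tT).
  by rewrite /B2bar mulmxA expmx_commute // -mulmxA.
have hGam : forall t, 0 <= t <= Ts ->
    Gam Ac V B1 B2 t = block_mx (Af t) (B1f t + B2f t) 0 1%:M.
  by move=> t tin; rewrite /Gam /Bo_s hAf // hB1 // hB2.
have hGq : forall t, 0 <= t <= Ts ->
    Gq t = expR (- (mu / 2 * t)) *: Gam Ac V B1 B2 t.
  move=> t tin; rewrite hGam //.
  exact: (psi_lemma sAf Af0 sAvf Avf0 sB1 B10 sB2 B20 sHq Hq0 tin).
have hGm : forall t, 0 <= t <= Ts ->
    Gm t = expR (- (mu * t)) *: Gam Ac V B1 B2 t.
  move=> t tin; rewrite hGam //.
  exact: (psi_lemma sAf Af0 sAvf Avf0 sB1 B10 sB2 B20 sHm Hm0 tin).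
have cHq := sHq.1; have cHm := sHm.1.
have cGq : {within `[0, Ts], continuous Gq}.
  apply: within_mulmx; last exact: within_cst.
  by apply: within_mulmx; [exact: within_cst | exact: cHq].
have cGm : {within `[0, Ts], continuous Gm}.
  apply: within_mulmx; last exact: within_cst.
  by apply: within_mulmx; [exact: within_cst | exact: cHm].
split.
- by rewrite hAf.
- by rewrite hB1 // hB2.
- have c1 : {within `[0, Ts], continuous (fun t => (Gq t)^T *m Qbar *m Gq t)}.
    apply: within_mulmx; last exact: cGq.
    by apply: within_mulmx; [exact: within_tr | exact: within_cst].
  have := ftc_mx sQ c1 (t := Ts); rewrite Ts0 lexx Q0 subr0 => <- //.
  apply: mxint_ext => s sin; rewrite hGq // trZ -scalemxAr -!scalemxAl scalerA.
  rewrite -expRD; congr (expR _ *: _).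
  by rewrite -opprD -mulrDl -splitr.
- have c1 : {within `[0, Ts], continuous (fun t => (Gm t)^T *m Mbar)}.
    by apply: within_mulmx; [exact: within_tr | exact: within_cst].
  have := ftc_mx sM c1 (t := Ts); rewrite Ts0 lexx M0 subr0 => <- //.
  by apply: mxint_ext => s sin; rewrite hGm // trZ -scalemxAl.
Qed.


Lemma VAc_comm (K : nat) (n : 'I_K -> nat) (Acb : forall k, 'M[R]_(n k))
  (v : 'I_K -> R) : V_of n v *m Ac_of Acb = Ac_of Acb *m V_of n v.
Proof.
rewrite /V_of.
set D := mxdiag (fun k => (v k)%:M).
have -> : Ac_of Acb = \mxblock_(j, k) (if j == k then conform_mx 0 (Acb j) else 0) by [].
rewrite /D mul_mxdiag_mxblock mul_mxblock_mxdiag.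
apply: eq_mxblock => i j.
rewrite mul_scalar_mx mul_mx_scalar.
case: eqP => [<-|_]; last by rewrite !scaler0.
by [].
Qed.

End Aux.

Unset Implicit Arguments.

Theorem proposition2 (R : realType) (nz nu : nat)
  (n : 'I_(nz * nu) -> nat)
  (Acb : forall k, 'M[R]_(n k)) (Bc : forall k, 'cV[R]_(n k))
  (Cc : forall k, 'rV[R]_(n k)) (Dc : 'I_(nz * nu) -> R)
  (tau : 'I_(nz * nu) -> R) (Ts : R) (m : 'I_(nz * nu) -> nat) (v : 'I_(nz * nu) -> R)
  (Qc : 'M[R]_nz) (mu : R)
  (Af Avf : R -> 'M[R]_(\sum_(k < nz * nu) n k))
  (B1f B2f : R -> 'M[R]_(\sum_(k < nz * nu) n k, (mbar_of m).+1 * nu))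
  (Hqf Hmf : R -> 'M[R]_(
      ((\sum_(k < nz * nu) n k) + (mbar_of m).+1 * nu)
    + ((\sum_(k < nz * nu) n k) + (mbar_of m).+1 * nu)
    + ((\sum_(k < nz * nu) n k) + (mbar_of m).+1 * nu)))
  (Qf : R -> 'M[R]_((\sum_(k < nz * nu) n k) + (mbar_of m).+1 * nu))
  (Mf : R -> 'M[R]_((\sum_(k < nz * nu) n k) + (mbar_of m).+1 * nu, nz)) :
  (forall k, 0 <= tau k) ->
  0 < Ts ->
  (forall k, tau k / Ts = (m k)%:R - v k /\ 0 <= v k < 1) ->
  Qc^T = Qc ->
  (forall x : 'cV[R]_nz, 0 <= (x^T *m Qc *m x) ord0 ord0) ->
  0 < mu ->
  let Ac := Ac_of Acb in
  let V := V_of n v in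
  let B1 := B1c_of Bc m in
  let B2 := B2c_of Bc m in
  let Ccm := Cc_of Cc in
  let Do := Do_of Dc m in
  let B2bar := V *m (B2 - B1) in
  let Hcq := Hc Ac V B1 B2 - (mu / 2)%:M in
  let Hcm := Hc Ac V B1 B2 - mu%:M in
  let Gq := fun t => E1 R _ _ *m Hqf t *m E2 R _ _ in
  let Gm := fun t => E1 R _ _ *m Hmf t *m E2 R _ _ in
  let Mbar := Mbarc Ccm Do Qc in
  let Qbar := Qbarc Ccm Do Qc in
  solves_on Ts Af (fun t => Ac *m Af t) -> Af 0 = 1%:M ->
  solves_on Ts Avf (fun t => (V *m Ac) *m Avf t) -> Avf 0 = 1%:M ->
  solves_on Ts B1f (fun t => Af t *m B1) -> B1f 0 = 0 ->
  solves_on Ts B2f (fun t => Avf t *m B2bar) -> B2f 0 = 0 ->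
  solves_on Ts Hqf (fun t => Hcq *m Hqf t) -> Hqf 0 = 1%:M ->
  solves_on Ts Hmf (fun t => Hcm *m Hmf t) -> Hmf 0 = 1%:M ->
  solves_on Ts Qf (fun t => (Gq t)^T *m Qbar *m Gq t) -> Qf 0 = 0 ->
  solves_on Ts Mf (fun t => (Gm t)^T *m Mbar) -> Mf 0 = 0 ->
  [/\ Af Ts = expmx (Ts *: Ac),
      B1f Ts + B2f Ts =
        mxint (fun t => expmx (t *: Ac) *m B1) 0 Ts
        + V *m mxint (fun t => expmx (t *: (V *m Ac)) *m (B2 - B1)) 0 Ts,
      Qf Ts = mxint (fun s => expR (- (mu * s)) *:
                 ((Gam Ac V B1 B2 s)^T *m Qbar *m Gam Ac V B1 B2 s)) 0 Ts
    & Mf Ts = mxint (fun s => expR (- (mu * s)) *: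
                 ((Gam Ac V B1 B2 s)^T *m Mbar)) 0 Ts].
Proof.
move=> _ Ts0 _ _ _ _ Ac V B1 B2 Ccm Do.
exact: (@main_generic R _ _ nz Ac V B1 B2 Ccm Do Qc mu Ts Af Avf B1f B2f
  Hqf Hmf Qf Mf Ts0 (VAc_comm Acb v)).
Qed.
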